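(* Let $m, n \geq 2$ be integers and let $D_n^m \subset \mathbb{R}^2$ be the set defined below, with bars $B_1,\dots,B_{2^n}$. Let $A$ and $A'$ be translates of $D_n^m$, with bars $B_i$ of $A$ and $B_i'$ of $A'$ being the translates of the corresponding bars of $D_n^m$. Suppose that for some $1 \leq r \leq 2^n$ the first bar $B_1'$ of $A'$ is obtained from the bar $B_r$ of $A$ by a translation by $y^\ast \geq 1$ downwards and by $x^\ast$ to the right, where $1 \leq x^\ast \leq m-1$. Then $A$ and $A'$ have disjoint interiors.
   Context: Let $s_1, s_2, \dots$ be the sequence with $s_i = 1 + \nu_2(i)$, where $\nu_2(i)$ is the exponent of $2$ in the prime factorization of $i$ (so $s_i$ is the position, counted from the right, of the lowest $1$ bit of $i$ in binary; the sequence begins $1,2,1,3,1,2,1,4,\dots$). For $i \geq 1$ put $y_i = \sum_{j=1}^{i-1} s_j$ (so $y_1 = 0$). For integers $m \geq 2$, $n \geq 1$, define the bars $B_i = [(i-1)m,\, im] \times [y_i,\, y_i + 1]$ for $1 \leq i \leq 2^n$ (axis-parallel rectangles of width $m$ and height $1$), and the connectors $V_i = [im-1,\, im] \times [y_i + 1,\, y_{i+1} + 1]$ for $1 \leq i \leq 2^n - 1$ (axis-parallel rectangles of width $1$ and height $s_i$). Define $D_n^m = \bigcup_{i=1}^{2^n} B_i \cup \bigcup_{i=1}^{2^n-1} V_i$; this is a topological disk in the plane. *)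

(* Defs.v *)
From Stdlib Require Import Reals Lra Lia Arith List.
Open Scope R_scope.

(* 2-adic valuation nu_2(i) (with nu_2(0) = 0, never used). *)
Fixpoint nu2_aux (fuel i : nat) : nat :=
  match fuel with
  | O => O
  | S f => if Nat.eqb i 0 then O
           else if Nat.even i then S (nu2_aux f (Nat.div i 2)) else O
  end.
Definition nu2 (i : nat) : nat := nu2_aux i i.

Definition s (i : nat) : nat := S (nu2 i).

Definition y (i : nat) : nat := fold_right Nat.add O (map s (seq 1 (i - 1))).

Definition bar (m i : nat) (p : R * R) : Prop :=
  INR ((i - 1) * m) <= fst p <= INR (i * m) /\
  INR (y i) <= snd p <= INR (y i) + 1.

Definition connector (m i : nat) (p : R * R) : Prop :=
  INR (i * m) - 1 <= fst p <= INR (i * m) /\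
  INR (y i) + 1 <= snd p <= INR (y (S i)) + 1.

Definition D (n m : nat) (p : R * R) : Prop :=
  (exists i, (1 <= i <= 2 ^ n)%nat /\ bar m i p) \/
  (exists i, (1 <= i <= 2 ^ n - 1)%nat /\ connector m i p).

Definition translate (S : R * R -> Prop) (v : R * R) (p : R * R) : Prop :=
  S (fst p - fst v, snd p - snd v).

Definition interior2 (S : R * R -> Prop) (p : R * R) : Prop :=
  exists eps, 0 < eps /\
    forall q : R * R,
      (fst q - fst p) ^ 2 + (snd q - snd p) ^ 2 < eps ^ 2 -> S q.

(* Main.v *)
Require Import Defs.
From Stdlib Require Import Reals Lra Lia Arith List Classical.
Local Open Scope nat_scope.

Lemma nu2_aux_fuel : forall f1 f2 i, (i <= f1)%nat -> (i <= f2)%nat -> nu2_aux f1 i = nu2_aux f2 i.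
Proof.
  induction f1; intros f2 i H1 H2.
  - assert (i = 0%nat) by lia; subst; destruct f2; reflexivity.
  - destruct f2.
    + assert (i = 0%nat) by lia; subst; reflexivity.
    + cbn [nu2_aux]. destruct (Nat.eqb i 0) eqn:E; auto.
      destruct (Nat.even i); auto. f_equal. apply Nat.eqb_neq in E.
      assert (Nat.div i 2 < i)%nat by (apply Nat.div_lt; lia).
      apply IHf1; lia.
Qed.

Lemma nu2_even : forall k, (1 <= k)%nat -> nu2 (2*k) = S (nu2 k).
Proof.
  intros k Hk. unfold nu2.
  replace (nu2_aux (2*k) (2*k)) with (nu2_aux (S (2*k-1)) (2*k)) by (f_equal; lia).
  cbn [nu2_aux].
  assert (E: Nat.eqb (2*k) 0 = false) by (apply Nat.eqb_neq; lia).
  rewrite E.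
  assert (E2: Nat.even (2*k) = true) by (rewrite Nat.even_mul; reflexivity).
  rewrite E2. f_equal.
  assert (E3: Nat.div (2*k) 2 = k) by (rewrite Nat.mul_comm; apply Nat.div_mul; lia).
  rewrite E3. apply nu2_aux_fuel; lia.
Qed.

Lemma nu2_odd : forall k, nu2 (2*k+1) = 0%nat.
Proof.
  intros k. unfold nu2.
  replace (nu2_aux (2*k+1) (2*k+1)) with (nu2_aux (S (2*k)) (2*k+1)) by (f_equal; lia).
  cbn [nu2_aux].
  assert (E: Nat.eqb (2*k+1) 0 = false) by (apply Nat.eqb_neq; lia).
  rewrite E.
  assert (E2: Nat.even (2*k+1) = false) by (rewrite Nat.even_add, Nat.even_mul; reflexivity).
  rewrite E2. reflexivity.
Qed.

Fixpoint Vr (N : nat) : nat := match N with O => O | S N' => (Vr N' + nu2 (S N'))%nat end.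

Lemma Vr_half : forall N, Vr (2*N) = (N + Vr N)%nat /\ Vr (2*N+1) = (N + Vr N)%nat.
Proof.
  induction N as [|N [IH1 IH2]].
  - split; reflexivity.
  - assert (A: Vr (2 * S N) = (S N + Vr (S N))%nat).
    { replace (2 * S N)%nat with (S (2*N+1)) by lia. cbn [Vr].
      replace (S (2*N+1)) with (2 * S N)%nat by lia.
      rewrite nu2_even by lia. rewrite IH2. lia. }
    split; auto.
    replace (2 * S N + 1)%nat with (S (2 * S N)) by lia. cbn [Vr].
    replace (S (2 * S N)) with (2 * S N + 1)%nat by lia.
    rewrite nu2_odd, A. cbn [Vr]. lia.
Qed.

Lemma Vr_div2 : forall N, Vr N = (N/2 + Vr (N/2))%nat.
Proof.
  intros N. destruct (Nat.Even_or_Odd N) as [[k Hk]|[k Hk]]; subst.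
  - assert (E: (2*k/2 = k)%nat) by (symmetry; apply Nat.div_unique with 0%nat; lia).
    rewrite E. apply Vr_half.
  - assert (E: ((2*k+1)/2 = k)%nat) by (symmetry; apply Nat.div_unique with 1%nat; lia).
    rewrite E. apply Vr_half.
Qed.

Lemma Vr_mono : forall a b, (a <= b)%nat -> (Vr a <= Vr b)%nat.
Proof.
  intros a b H. induction H; auto. cbn [Vr]. lia.
Qed.

Lemma Vr_super : forall K a b, (a + b <= K)%nat -> (Vr a + Vr b <= Vr (a+b))%nat.
Proof.
  induction K; intros a b H.
  - assert (a = 0%nat) by lia; assert (b = 0%nat) by lia; subst; simpl; lia.
  - destruct a as [|a']. { change (Vr 0) with 0%nat; simpl (0 + _)%nat; lia. }
    destruct b as [|b']. { replace (S a' + 0)%nat with (S a') by lia; change (Vr 0) with 0%nat; lia. }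
    set (a := S a') in *. set (b := S b') in *.
    rewrite (Vr_div2 a), (Vr_div2 b), (Vr_div2 (a+b)).
    assert (Ha: (a/2 < a)%nat) by (apply Nat.div_lt; unfold a; lia).
    assert (Hb: (b/2 < b)%nat) by (apply Nat.div_lt; unfold b; lia).
    assert (H2: (2*(a/2+b/2) <= a+b)%nat)
      by (pose proof (Nat.Div0.mul_div_le a 2); pose proof (Nat.Div0.mul_div_le b 2); lia).
    assert (H3: (a/2 + b/2 <= (a+b)/2)%nat).
    { pose proof (Nat.Div0.div_le_mono _ _ 2 H2) as H4.
      rewrite Nat.mul_comm, Nat.div_mul in H4 by lia. exact H4. }
    pose proof (IHK (a/2)%nat (b/2)%nat ltac:(lia)).
    pose proof (Vr_mono _ _ H3). lia.
Qed.

Lemma fold_add : forall l c, fold_right Nat.add c l = (c + fold_right Nat.add 0 l)%nat.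
Proof. induction l; intros c; simpl; [lia|rewrite IHl; lia]. Qed.

Lemma yS_Vr : forall N, y (S N) = (N + Vr N)%nat.
Proof.
  induction N.
  - reflexivity.
  - unfold y in *. replace (S (S N) - 1)%nat with (S N) by lia.
    replace (S N - 1)%nat with N in IHN by lia.
    rewrite seq_S, map_app, fold_right_app. simpl (fold_right Nat.add 0 (map s (1 + N :: nil))%nat).
    rewrite fold_add, IHN. cbn [Vr]. unfold s. simpl. lia.
Qed.

Lemma y_Vr : forall i, y i = ((i-1) + Vr (i-1))%nat.
Proof.
  intros [|i]. reflexivity. rewrite yS_Vr. f_equal; f_equal; lia.
Qed.

Lemma y_super1 : forall j r i, (1 <= j)%nat -> (1 <= r)%nat -> (j + r - 1 <= i)%nat ->
  (y j + y r <= y i)%nat.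
Proof.
  intros j r i H1 H2 H3. rewrite !y_Vr.
  pose proof (Vr_super _ (j-1) (r-1) (le_n _)).
  pose proof (Vr_mono (j-1+(r-1)) (i-1) ltac:(lia)). lia.
Qed.

Lemma y_super2 : forall j r i, (1 <= r)%nat -> (j + r <= i)%nat ->
  (y (S j) + y r <= y i)%nat.
Proof.
  intros j r i H2 H3. rewrite !y_Vr. replace (S j - 1)%nat with j by lia.
  pose proof (Vr_super _ j (r-1) (le_n _)).
  pose proof (Vr_mono (j+(r-1)) (i-1) ltac:(lia)). lia.
Qed.
Local Open Scope R_scope.

Lemma Dlow : forall n m X Y, (2 <= m)%nat -> D n m (X, Y) ->
  exists i, (1 <= i)%nat /\ INR (y i) <= Y /\ X <= INR (i*m).
Proof.
  intros n m X Y hm [[i [Hi [[_ H1] [H2 _]]]] | [i [Hi [[_ H1] [H2 _]]]]];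
    exists i; cbn [fst snd] in *; repeat split; try lia; lra.
Qed.

Lemma Dhigh : forall n m U V, D n m (U, V) ->
  exists j, (1 <= j)%nat /\ ((INR ((j-1)*m) <= U /\ V <= INR (y j) + 1) \/
                             (INR (j*m) - 1 <= U /\ V <= INR (y (S j)) + 1)).
Proof.
  intros n m U V [[j [Hj [[H1 _] [_ H2]]]] | [j [Hj [[H1 _] [_ H2]]]]];
    exists j; cbn [fst snd] in *; split; try lia; [left|right]; split; lra.
Qed.

Lemma key (n m r : nat) (hm : (2<=m)%nat) (hr : (1<=r)%nat) xs ys
  (hx : 1 <= xs) (hy : 1 <= ys) X Y :
  D n m (X,Y) -> D n m (X - INR ((r-1)*m) - xs, Y - INR (y r) + ys) ->
  (exists k, X = INR k) \/ (exists k, Y = INR k).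
Proof.
  intros H1 H2.
  destruct (Dlow n m X Y hm H1) as [i [Hi [Hyi HXi]]].
  destruct (Dhigh n m _ _ H2) as [j [Hj [[Ha Hb] | [Ha Hb]]]].
  - assert (HX : INR ((j-1)*m + (r-1)*m) < INR (i*m)) by (rewrite plus_INR; lra).
    apply INR_lt in HX. rewrite <- Nat.mul_add_distr_r in HX.
    apply Nat.mul_lt_mono_pos_r in HX; [|lia].
    pose proof (y_super1 j r i Hj hr ltac:(lia)) as Hs.
    apply le_INR in Hs. rewrite plus_INR in Hs.
    right. exists (y i). lra.
  - destruct (Rle_lt_or_eq_dec _ _ HXi) as [HXl | HXe].
    2: { left. exists (i*m)%nat. exact HXe. }
    assert (HX : INR (j*m + (r-1)*m) < INR (i*m)) by (rewrite plus_INR; lra).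
    apply INR_lt in HX. rewrite <- Nat.mul_add_distr_r in HX.
    apply Nat.mul_lt_mono_pos_r in HX; [|lia].
    pose proof (y_super2 j r i hr ltac:(lia)) as Hs.
    apply le_INR in Hs. rewrite plus_INR in Hs.
    right. exists (y i). lra.
Qed.

Lemma notboth : forall x d, 0 < d < 1 -> (exists k, x = INR k) -> (exists k, x + d = INR k) -> False.
Proof.
  intros x d Hd [k1 H1] [k2 H2].
  destruct (le_lt_dec k2 k1) as [L|L].
  - apply le_INR in L. lra.
  - apply le_INR in L. rewrite S_INR in L. lra.
Qed.

Theorem lemma2 (m n : nat) (hm : (2 <= m)%nat) (hn : (2 <= n)%nat)
  (a b : R * R) (r : nat) (hr : (1 <= r <= 2 ^ n)%nat)
  (xs ys : R) (hx : 1 <= xs <= INR m - 1) (hy : 1 <= ys)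
  (hB : forall p : R * R,
      translate (bar m 1) b p <->
      translate (translate (bar m r) a) (xs, - ys) p) :
  forall p : R * R,
    ~ (interior2 (translate (D n m) a) p /\ interior2 (translate (D n m) b) p).
Proof.
  intros p [[e1 [He1 H1]] [e2 [He2 H2]]].
  destruct a as [a1 a2]. destruct b as [b1 b2]. destruct p as [p1 p2].
  assert (Z0 : INR ((1-1)*m) = 0) by (rewrite Nat.sub_diag, Nat.mul_0_l; reflexivity).
  assert (Y1 : INR (y 1) = 0) by reflexivity.
  assert (M1 : 0 <= INR (1*m)) by apply pos_INR.
  assert (Mr : INR ((r-1)*m) <= INR (r*m)) by (apply le_INR; apply Nat.mul_le_mono_r; lia).
  assert (Hb : b1 = a1 + INR ((r-1)*m) + xs /\ b2 = a2 + INR (y r) - ys).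
  { destruct (proj1 (hB (b1, b2))) as [[F1 _] [F2 _]].
    { unfold translate, bar; cbn [fst snd]. rewrite Z0, Y1. lra. }
    destruct (proj2 (hB (a1 + INR ((r-1)*m) + xs, a2 + INR (y r) - ys))) as [[G1 _] [G2 _]].
    { unfold translate, bar; cbn [fst snd]. lra. }
    unfold translate, bar in *; cbn [fst snd] in *. rewrite Z0 in G1. rewrite Y1 in G2. lra. }
  destruct Hb as [Hb1 Hb2].
  set (eps := Rmin e1 e2).
  assert (Heps : 0 < eps) by (unfold eps; apply Rmin_glb_lt; lra).
  set (d := Rmin (eps/2) (1/2)).
  assert (Hd1 : 0 < d) by (unfold d; apply Rmin_glb_lt; lra).
  assert (Hd2 : d <= eps/2) by (unfold d; apply Rmin_l).
  assert (Hd3 : d <= 1/2) by (unfold d; apply Rmin_r).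
  assert (He1' : eps <= e1) by apply Rmin_l.
  assert (He2' : eps <= e2) by apply Rmin_r.
  assert (Cx : exists dx, (dx = 0 \/ dx = d) /\ ~ (exists k, p1 + dx - a1 = INR k)).
  { destruct (classic (exists k, p1 - a1 = INR k)) as [Q|Q].
    - exists d. split; [right; reflexivity|]. intro Q2.
      apply (notboth (p1 - a1) d); [lra|exact Q|].
      destruct Q2 as [k Hk]; exists k; lra.
    - exists 0. split; [left; reflexivity|]. intros [k Hk]. apply Q. exists k; lra. }
  assert (Cy : exists dy, (dy = 0 \/ dy = d) /\ ~ (exists k, p2 + dy - a2 = INR k)).
  { destruct (classic (exists k, p2 - a2 = INR k)) as [Q|Q].
    - exists d. split; [right; reflexivity|]. intro Q2.
      apply (notboth (p2 - a2) d); [lra|exact Q|].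
      destruct Q2 as [k Hk]; exists k; lra.
    - exists 0. split; [left; reflexivity|]. intros [k Hk]. apply Q. exists k; lra. }
  destruct Cx as [dx [Hdx Nx]]. destruct Cy as [dy [Hdy Ny]].
  assert (Hdist : dx^2 + dy^2 < eps^2).
  { assert (dx^2 <= d^2) by (destruct Hdx; subst; nra).
    assert (dy^2 <= d^2) by (destruct Hdy; subst; nra).
    nra. }
  assert (Q1 := H1 (p1 + dx, p2 + dy)). assert (Q2 := H2 (p1 + dx, p2 + dy)).
  cbn [fst snd] in Q1, Q2.
  replace (p1 + dx - p1) with dx in Q1, Q2 by ring.
  replace (p2 + dy - p2) with dy in Q1, Q2 by ring.
  specialize (Q1 ltac:(nra)). specialize (Q2 ltac:(nra)).
  unfold translate in Q1, Q2; cbn [fst snd] in Q1, Q2.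
  replace (p1 + dx - b1) with (p1 + dx - a1 - INR ((r-1)*m) - xs) in Q2 by lra.
  replace (p2 + dy - b2) with (p2 + dy - a2 - INR (y r) + ys) in Q2 by lra.
  destruct (key n m r hm ltac:(lia) xs ys ltac:(lra) hy _ _ Q1 Q2); auto.
Qed.
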